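(* Suppose a three-link protocol given by maps $s_{AB},s_{AC},s_{BC}$ (and decision functions) solves MEQ-AD$(3,M)$, and let $G(U,V,E)$ be the associated bipartite graph. If $x\neq x'$ and the edges corresponding to $x$ and $x'$ in $G$ are adjacent (share an endpoint), or there is some other edge of $G$ adjacent to both of them, then $s_{BC}(x)\neq s_{BC}(x')$. In other words, $x\mapsto s_{BC}(x)$ is a distance-2 edge coloring of $G$.
   Context: Three nodes $A,B,C$ hold inputs $x_A,x_B,x_C\in\{1,\dots,M\}$. A three-link protocol is given by maps $s_{AB},s_{AC},s_{BC}$ from $\{1,\dots,M\}$ to finite sets: $A$ sends $s_{AB}(x_A)$ to $B$ and $s_{AC}(x_A)$ to $C$, and $B$ sends $s_{BC}(x_B)$ to $C$. Each node outputs a bit: $EQ_A$ is a function of $x_A$, $EQ_B$ a function of $(x_B,s_{AB}(x_A))$, and $EQ_C$ a function of $(x_C,s_{AC}(x_A),s_{BC}(x_B))$. The protocol solves MEQ-AD$(3,M)$ if for all inputs, $EQ_A=EQ_B=EQ_C=0$ holds iff $x_A=x_B=x_C$. The associated bipartite graph $G(U,V,E)$ has vertices $U_i$ for $i$ in the range of $s_{AB}$, $V_j$ for $j$ in the range of $s_{AC}$, and an edge $(U_i,V_j)$ iff $i=s_{AB}(x)$, $j=s_{AC}(x)$ for some $x$; this edge corresponds to $x$ (each edge corresponds to a unique $x$ when the protocol is correct). A distance-2 edge coloring assigns colors to edges so that any two distinct edges that share an endpoint, or are both adjacent to a common third edge, get different colors. *)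

(* Defs.v *)
From mathcomp Require Import all_boot.
Set Implicit Arguments. Unset Strict Implicit. Unset Printing Implicit Defensive.

(* Inputs {1..M} are represented by 'I_M (= {0..M-1}).  Message alphabets are
   arbitrary finite types.  Output bits are booleans, with bit 0 = false. *)

Definition solves_MEQ_AD3 (M : nat) (TAB TAC TBC : finType)
  (sAB : 'I_M -> TAB) (sAC : 'I_M -> TAC) (sBC : 'I_M -> TBC)
  (EQA : 'I_M -> bool) (EQB : 'I_M -> TAB -> bool)
  (EQC : 'I_M -> TAC -> TBC -> bool) : Prop :=
  forall xA xB xC : 'I_M,
    (EQA xA = false /\ EQB xB (sAB xA) = false /\
     EQC xC (sAC xA) (sBC xB) = false) <-> (xA = xB /\ xB = xC).

(* Bipartite graph G(U,V,E): U-vertices are values of sAB, V-vertices values of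
   sAC; an edge (U_i, V_j) is a pair (i, j).  The edge corresponding to x: *)
Definition edge_of (M : nat) (TAB TAC : finType)
  (sAB : 'I_M -> TAB) (sAC : 'I_M -> TAC) (x : 'I_M) : TAB * TAC :=
  (sAB x, sAC x).

Definition is_edge (M : nat) (TAB TAC : finType)
  (sAB : 'I_M -> TAB) (sAC : 'I_M -> TAC) (e : TAB * TAC) : Prop :=
  exists x : 'I_M, e = edge_of sAB sAC x.

Definition edges_adjacent (TAB TAC : finType) (e f : TAB * TAC) : Prop :=
  e <> f /\ (e.1 = f.1 \/ e.2 = f.2).

(* Main.v *)
Require Import Defs.
From mathcomp Require Import all_boot.

Theorem lemma4 (M : nat) (TAB TAC TBC : finType)
  (sAB : 'I_M -> TAB) (sAC : 'I_M -> TAC) (sBC : 'I_M -> TBC)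
  (EQA : 'I_M -> bool) (EQB : 'I_M -> TAB -> bool)
  (EQC : 'I_M -> TAC -> TBC -> bool) :
  solves_MEQ_AD3 sAB sAC sBC EQA EQB EQC ->
  forall x x' : 'I_M, x <> x' ->
  (edges_adjacent (edge_of sAB sAC x) (edge_of sAB sAC x') \/
   exists e, is_edge sAB sAC e /\
     e <> edge_of sAB sAC x /\ e <> edge_of sAB sAC x' /\
     edges_adjacent e (edge_of sAB sAC x) /\
     edges_adjacent e (edge_of sAB sAC x')) ->
  sBC x <> sBC x'.
Proof.
move=> H.
have Z : forall a, EQA a = false /\ EQB a (sAB a) = false /\ EQC a (sAC a) (sBC a) = false.
  by move=> a; apply (proj2 (H a a a)).
have K : forall a b c, EQB b (sAB a) = false -> EQC c (sAC a) (sBC b) = false -> a = b /\ b = c.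
  move=> a b c h1 h2; apply (proj1 (H a b c)).
  by have [? _] := Z a; split.
move=> x x' hne hadj hbc.
have [_ [Bx Cx]] := Z x; have [_ [Bx' Cx']] := Z x'.
have hAB : sAB x = sAB x' -> False.
  move=> e; apply: hne.
  have h1 : EQB x' (sAB x) = false by rewrite e.
  have h2 : EQC x (sAC x) (sBC x') = false by rewrite -hbc.
  by have [h _] := K x x' x h1 h2.
have hAC : sAC x = sAC x' -> False.
  move=> e; apply: hne.
  have h2 : EQC x' (sAC x) (sBC x) = false by rewrite e hbc.
  by have [_ h] := K x x x' Bx h2.
case: hadj => [[_ [e|e]] | [f [[y ->] [n1 [n2 [[_ a1] [_ a2]]]]]]].
- exact: hAB.
- exact: hAC.
- rewrite /edge_of /= in a1 a2 n1 n2.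
  case: a1 a2 => a1 [] a2.
  + by apply: hAB; rewrite -a1 a2.
  + have h1 : EQB x (sAB y) = false by rewrite a1.
    have h2 : EQC x' (sAC y) (sBC x) = false by rewrite a2 hbc.
    have [h _] := K y x x' h1 h2.
    by apply: n1; rewrite h.
  + have h1 : EQB x' (sAB y) = false by rewrite a2.
    have h2 : EQC x (sAC y) (sBC x') = false by rewrite a1 -hbc.
    have [h _] := K y x' x h1 h2.
    by apply: n2; rewrite h.
  + by apply: hAC; rewrite -a1 a2.
Qed.
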